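(* If $G$ is a connected graph and $n\ge 1$, then $\mathrm{gp}(G\boxtimes K_n)=n\cdot \mathrm{gp}(G)$. Moreover, if $\mathrm{gp}(G)=\omega(G_{\rm SR})$, then $\mathrm{gp}(G\boxtimes K_n)=\omega((G\boxtimes K_n)_{\rm SR})$.
   Context: All graphs are finite and simple. The strong product $G\boxtimes H$ has vertex set $V(G)\times V(H)$, with distinct $(g,h),(g',h')$ adjacent iff ($g=g'$ or $gg'\in E(G)$) and ($h=h'$ or $hh'\in E(H)$). For a connected graph $G$, a set $S\subseteq V(G)$ is a general position set if no three pairwise distinct vertices of $S$ lie on a common geodesic (shortest path); $\mathrm{gp}(G)$ is the maximum cardinality of a general position set. A vertex $u$ is maximally distant from $v$ if every neighbor $w$ of $u$ satisfies $d_G(v,w)\le d_G(u,v)$; $u,v$ are mutually maximally distant (MMD) if each is maximally distant from the other. The strong resolving graph $G_{\rm SR}$ has vertex set $V(G)$, distinct vertices adjacent iff MMD in $G$. $\omega$ is the clique number. *)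

(* Defs.v *)
(* Simple graphs on a finType T given by an edge relation
   e : rel T (assumed symmetric and irreflexive in the theorem). *)
From mathcomp Require Import all_boot.
Set Implicit Arguments. Unset Strict Implicit. Unset Printing Implicit Defensive.

Section Graphs.
Variable T : finType.
Variable e : rel T.

Definition connected_graph : Prop := forall x y : T, connect e x y.

Definition walk_of_length (k : nat) (x y : T) : bool :=
  [exists p : k.-tuple T, path e x p && (last x p == y)].

(* shortest-path distance: least k with a walk of length k from x to y
   (a shortest walk has < #|T| edges; value #|T| if y is unreachable,
   which never happens in a connected graph). *)
Definition dist (x y : T) : nat :=
  find (fun k => walk_of_length k x y) (iota 0 #|T|).

Definition on_common_geodesic (u v w : T) : bool :=
  [exists x : T, exists y : T, exists p : (dist x y).-tuple T,
     [&& path e x p, last x p == y,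
         u \in x :: (p : seq T), v \in x :: (p : seq T) & w \in x :: (p : seq T)]].

Definition gp_set (S : {set T}) : bool :=
  [forall u in S, forall v in S, forall w in S,
     [&& u != v, v != w & u != w] ==> ~~ on_common_geodesic u v w].

Definition gp : nat := \max_(S : {set T} | gp_set S) #|S|.

Definition max_distant (u v : T) : bool :=
  [forall w : T, e u w ==> (dist v w <= dist u v)].

Definition MMD (u v : T) : bool := max_distant u v && max_distant v u.

Definition clique (S : {set T}) : bool :=
  [forall u in S, forall v in S, (u != v) ==> e u v].

Definition omega : nat := \max_(S : {set T} | clique S) #|S|.
End Graphs.

Definition strong_resolving (T : finType) (e : rel T) : rel T :=
  fun u v => (u != v) && MMD e u v.

Definition strong_prod (T1 T2 : finType) (e1 : rel T1) (e2 : rel T2)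
  : rel (T1 * T2)%type :=
  fun x y => [&& x != y, (x.1 == y.1) || e1 x.1 y.1 & (x.2 == y.2) || e2 x.2 y.2].

Definition complete_graph (n : nat) : rel 'I_n := fun i j => i != j.
Arguments complete_graph n : clear implicits.

(* Main.v *)
Require Import Defs.
From mathcomp Require Import all_boot.
From mathcomp Require Import zify.
Set Implicit Arguments. Unset Strict Implicit. Unset Printing Implicit Defensive.

Section Gen.
Variable T : finType.
Variable e : rel T.

Lemma walkP k x y :
  reflect (exists s, [/\ path e x s, last x s = y & size s = k])
          (walk_of_length e k x y).
Proof.
apply: (iffP existsP) => [[t /andP[pt /eqP lt]]|[s [ps ls sz]]].
  by exists (val t); rewrite size_tuple.
have sz' : size s == k by rewrite sz.
by exists (Tuple sz'); rewrite /= ps ls eqxx.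
Qed.

Lemma dist_min k x y : walk_of_length e k x y -> dist e x y <= k.
Proof.
move=> w; rewrite /dist.
case: (ltnP k #|T|) => hk.
  rewrite leqNgt; apply/negP => lt.
  by have := before_find 0 lt; rewrite nth_iota // add0n w.
by apply: leq_trans (find_size _ _) _; rewrite size_iota.
Qed.

Lemma dist_self x : dist e x x = 0.
Proof.
apply/eqP; rewrite -leqn0; apply: dist_min; apply/walkP; by exists [::].
Qed.

Hypothesis conn : connected_graph e.

Lemma dist_walk x y : walk_of_length e (dist e x y) x y.
Proof.
have /connectP [s ps ls] := conn x y.
move: ls; case: (shortenP ps) => s' ps' us' _ ls'.
have hw : walk_of_length e (size s') x y by apply/walkP; exists s'; split.
have hs : size s' < #|T|.
  have : #|x :: s'| <= #|T| by apply: max_card.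
  by rewrite (card_uniqP us').
have hh : has (fun k => walk_of_length e k x y) (iota 0 #|T|).
  by apply/hasP; exists (size s') => //; rewrite mem_iota.
rewrite /dist; have := nth_find 0 hh.
have : find (fun k => walk_of_length e k x y) (iota 0 #|T|) < #|T|.
  by rewrite -{2}(size_iota 0 #|T|) -has_find.
by move=> hf; rewrite nth_iota ?add0n.
Qed.

Lemma dist0 x y : dist e x y = 0 -> x = y.
Proof.
move=> h; have := dist_walk x y; rewrite h => /walkP [s [_ ls ss]].
by move: ss ls; case: s.
Qed.

Lemma walk_cat k l x y z :
  walk_of_length e k x y -> walk_of_length e l y z -> walk_of_length e (k + l) x z.
Proof.
move=> /walkP [s1 [p1 l1 z1]] /walkP [s2 [p2 l2 z2]].
apply/walkP; exists (s1 ++ s2); split.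
- by rewrite cat_path p1 l1 p2.
- by rewrite last_cat l1.
- by rewrite size_cat z1 z2.
Qed.

Lemma dist_tri x y z : dist e x z <= dist e x y + dist e y z.
Proof. by apply: dist_min; apply: walk_cat; apply: dist_walk. Qed.

Lemma last_take (a : T) q i : i <= size q -> last a (take i q) = nth a (a :: q) i.
Proof.
elim: q a i => [|b q IH] a [|i] //= hi.
by rewrite IH // (set_nth_default b a).

Qed.

Lemma geo_nth a q i : path e a q -> size q = dist e a (last a q) ->
  i <= size q -> dist e a (nth a (a :: q) i) = i.
Proof.
move=> pq sq hi.
set m := nth a (a :: q) i.
have := pq; rewrite -(cat_take_drop i q) cat_path last_take // => /andP[p1 p2].
have h1 : dist e a m <= i.
  apply: dist_min; apply/walkP; exists (take i q); split => //.
    by rewrite last_take.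
  by rewrite size_take_min; apply/minn_idPl.
have h2 : dist e m (last a q) <= size q - i.
  apply: dist_min; apply/walkP; exists (drop i q); split => //.
    by rewrite -{2}(cat_take_drop i q) last_cat last_take.
  by rewrite size_drop.
have := dist_tri a m (last a q); rewrite -sq => h3.
lia.
Qed.

Lemma geo_uniq a q : path e a q -> size q = dist e a (last a q) -> uniq (a :: q).
Proof.
move=> pq sq; apply/(uniqP a) => i j; rewrite !inE /= !ltnS => hi hj eq.
by rewrite -(geo_nth pq sq hi) -(geo_nth pq sq hj) eq.
Qed.

Hypothesis esym : symmetric e.

Lemma dist_le_sym x y : dist e x y <= dist e y x.
Proof.
have /walkP [s [ps ls ss]] := dist_walk y x.
apply: dist_min; apply/walkP; exists (rev (belast y s)); subst x; split.
- rewrite rev_path; move: ps; apply: sub_path => u v /=.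
  by rewrite esym.
- case: (s) => [|b s'] //=.
  by rewrite rev_cons last_rcons.
- by rewrite size_rev size_belast.
Qed.

Lemma dist_sym x y : dist e x y = dist e y x.
Proof. by apply/eqP; rewrite eqn_leq !dist_le_sym. Qed.

End Gen.

Lemma uniq_map_inj (A B : eqType) (f : A -> B) s x y :
  uniq (map f s) -> x \in s -> y \in s -> f x = f y -> x = y.
Proof.
elim: s => [|a s IH] //= /andP[na us]; rewrite !inE.
case/orP=> [/eqP->|xs]; case/orP=> [/eqP->|ys] //.
- by move=> h; move: na; rewrite h map_f.
- by move=> h; move: na; rewrite -h map_f.
- exact: IH.
Qed.

Section Prod.
Variable T : finType.
Variable e : rel T.
Variable n : nat.
Hypothesis irr : irreflexive e.
Hypothesis esym : symmetric e.
Hypothesis conn : connected_graph e.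

Local Notation P := (T * 'I_n)%type.
Local Notation E := (strong_prod e (complete_graph n)).

Lemma EE (X Y : P) : E X Y = (X != Y) && ((X.1 == Y.1) || e X.1 Y.1).
Proof. by rewrite /strong_prod /complete_graph orbN andbT. Qed.

Lemma lift_path (c : T -> 'I_n) a i q :
  path e a q -> path E (a, i) [seq (g, c g) | g <- q].
Proof.
elim: q a i => //= b q IH a i /andP[eab pq].
rewrite IH // andbT EE /= eab orbT andbT.
apply/eqP => -[hab _]; move: eab; by rewrite hab irr.
Qed.

Lemma proj_path (X : P) p : path E X p ->
  exists q, [/\ path e X.1 q, last X.1 q = (last X p).1, size q <= size p
             & (size q = size p -> q = map fst p)].
Proof.
elim: p X => [|B p IH] X /=.
  by move=> _; exists [::]; split => //; case.
case/andP=> eXB pB; have [q [pq lq sq eq]] := IH B pB.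
move: eXB; rewrite EE => /andP[_ /orP[/eqP h|h]].
  exists q; rewrite h; split => //; first exact: leqW.
  by move=> hs; move: sq; rewrite hs ltnn.
exists (B.1 :: q); split => //=; first by rewrite h pq.
by move=> [/eq ->].
Qed.

Lemma conn_E : connected_graph E.
Proof.
move=> X Y; apply/connectP.
have /connectP [s ps ls] := conn X.1 Y.1.
case: s ps ls => [|b s] ps ls.
  case: (eqVneq X Y) => [->|hXY]; first by exists [::].
  exists [:: Y] => //=; by rewrite EE hXY ls eqxx.
exists [seq (g, Y.2) | g <- b :: s].
  by case: X ps ls => x i ps _; exact: (lift_path (fun _ => Y.2)).
move: ls => /= ls; rewrite (last_map (fun g => (g, Y.2))) -ls.
by case: (Y).
Qed.

Lemma distE_eq (X Y : P) : X.1 != Y.1 -> dist E X Y = dist e X.1 Y.1.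
Proof.
case: X => x i; case: Y => y j /= hxy.
apply/eqP; rewrite eqn_leq; apply/andP; split.
  have /walkP [s [ps ls ss]] := dist_walk conn x y.
  case: s ps ls ss => [|b s] ps ls ss; first by move: hxy; rewrite -ls eqxx.
  apply: dist_min; apply/walkP; exists [seq (g, j) | g <- b :: s]; split.
  - exact: (lift_path (fun _ => j)).
  - by rewrite /= last_map -ls.
  - by rewrite size_map.
have /walkP [p [pp lp sp]] := dist_walk conn_E (x, i) (y, j).
have [q [pq lq sq _]] := proj_path pp.
rewrite -sp; apply: leq_trans sq; apply: dist_min; apply/walkP.
by exists q; split => //; rewrite lq lp.
Qed.

Lemma distE_fiber (X Y : P) : X.1 = Y.1 -> dist E X Y <= 1.
Proof.
move=> h; case: (eqVneq X Y) => [->|hXY]; first by rewrite dist_self.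
apply: dist_min; apply/walkP; exists [:: Y]; split => //=.
by rewrite EE hXY h eqxx.
Qed.

Lemma three_short (x : P) p u v w : size p <= 1 ->
  u \in x :: p -> v \in x :: p -> w \in x :: p -> [&& u != v, v != w & u != w] = false.
Proof.
move: p => [|b [|c p]] //= _; rewrite !inE.
  by move=> /eqP-> /eqP-> /eqP->; rewrite eqxx.
by move=> /orP[]/eqP-> /orP[]/eqP-> /orP[]/eqP->; rewrite ?eqxx ?andbF.
Qed.

Lemma gp_lift (S : {set T}) : gp_set e S -> gp_set E (setX S [set: 'I_n]).
Proof.
move=> hS; apply/forallP => U; apply/implyP => hU; apply/forallP => V; apply/implyP => hV.
apply/forallP => W; apply/implyP => hW; apply/implyP => d3.
apply/negP => /existsP [X /existsP [Y /existsP [p /and5P[pp /eqP lp hu hv hw]]]].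
case: (eqVneq X.1 Y.1) => hxy.
  have sp : size p <= 1 by rewrite size_tuple; apply: distE_fiber.
  by move: d3; rewrite (three_short sp hu hv hw).
have [q [pq lq sq eq]] := proj_path pp.
have sp : size p = dist e X.1 Y.1 by rewrite size_tuple distE_eq.
have dq : dist e X.1 Y.1 <= size q.
  by apply: dist_min; apply/walkP; exists q; split => //; rewrite lq lp.
have sq' : size q = size p by apply/eqP; rewrite eqn_leq sq sp dq.
have qe := eq sq'.
have lq' : last X.1 q = Y.1 by rewrite lq lp.
have uq : uniq (X.1 :: q) by apply: (geo_uniq conn pq); rewrite lq' sq' sp.
have uq' : uniq (map fst (X :: p)) by rewrite /= -qe.
case/and3P: d3 => nuv nvw nuw.
have ne : forall A B, A \in X :: (p : seq P) -> B \in X :: (p : seq P) -> A != B -> A.1 != B.1.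
  by move=> A B hA hB; apply: contraNneq => h; apply/eqP; apply: (uniq_map_inj uq' hA hB h).
have mX : forall A : P, A \in setX S [set: 'I_n] -> A.1 \in S.
  by move=> [a k]; rewrite in_setX => /andP[].
move: hU hV hW => /mX hU /mX hV /mX hW.
have := hS; move/forallP/(_ U.1)/implyP/(_ hU)/forallP/(_ V.1)/implyP/(_ hV)/forallP/(_ W.1)/implyP/(_ hW).
rewrite (ne _ _ hu hv nuv) (ne _ _ hv hw nvw) (ne _ _ hu hw nuw) /= => /negP; apply.
have szq : size q == dist e X.1 Y.1 by rewrite sq' sp.
apply/existsP; exists X.1; apply/existsP; exists Y.1; apply/existsP; exists (Tuple szq).
have mf : forall A, A \in X :: (p : seq P) -> A.1 \in X.1 :: q.
  by move=> A hA; rewrite qe -/(map fst (X :: (p : seq P))) map_f.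
by rewrite /= pq lq' eqxx !mf.
Qed.

Lemma gp_proj (S : {set P}) : gp_set E S -> gp_set e (fst @: S).
Proof.
move=> hS; apply/forallP => u; apply/implyP => /imsetP [U hU ->].
apply/forallP => v; apply/implyP => /imsetP [V hV ->].
apply/forallP => w; apply/implyP => /imsetP [W hW ->].
apply/implyP => /and3P [nuv nvw nuw]; apply/negP.
move=> /existsP [x /existsP [y /existsP [q /and5P[pq /eqP lq hu hv hw]]]].
pose c g := if g == U.1 then U.2 else if g == V.1 then V.2 else W.2.
have cU : c U.1 = U.2 by rewrite /c eqxx.
have cV : c V.1 = V.2 by rewrite /c eq_sym (negbTE nuv) eqxx.
have cW : c W.1 = W.2 by rewrite /c eq_sym (negbTE nuw) eq_sym (negbTE nvw).
have hxy : x != y.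
  apply/eqP => hxy; have : size q = 0 by rewrite size_tuple hxy dist_self.
  move=> /size0nil q0.
  move: hu hv; rewrite q0 !inE => /eqP h1 /eqP h2; by move: nuv; rewrite h1 h2 eqxx.
pose f g := (g, c g).
pose p := map f q.
have pp : path E (f x) p by apply: lift_path.
have lp : last (f x) p = f y by rewrite last_map lq.
have szp : size p == dist E (f x) (f y) by rewrite size_map size_tuple distE_eq.
have mf : forall A : P, A.2 = c A.1 -> A.1 \in x :: (q : seq T) -> A \in f x :: p.
  move=> [a k] /= hk hA; have -> : (a, k) = f a by rewrite /f hk.
  by rewrite -/(map f (x :: (q : seq T))) map_f.
have := hS; move/forallP/(_ U)/implyP/(_ hU)/forallP/(_ V)/implyP/(_ hV)/forallP/(_ W)/implyP/(_ hW).
have nn : forall A B : P, A.1 != B.1 -> A != B by move=> A B; apply: contraNneq => ->.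
rewrite (nn _ _ nuv) (nn _ _ nvw) (nn _ _ nuw) /= => /negP; apply.
apply/existsP; exists (f x); apply/existsP; exists (f y); apply/existsP; exists (Tuple szp).
by rewrite /= pp lp eqxx !mf // ?cU ?cV ?cW.
Qed.

Lemma dist_pos (X Y : P) : X != Y -> 0 < dist E X Y.
Proof.
move=> h; rewrite lt0n; apply/eqP => /(dist0 conn_E) h'; by rewrite h' eqxx in h.
Qed.

Lemma mdE_fiber (X Y : P) : X != Y -> X.1 = Y.1 -> max_distant E X Y.
Proof.
move=> hXY h1; apply/forallP => W; apply/implyP; rewrite EE => /andP[_ h].
apply: leq_trans (dist_pos hXY).
case: (eqVneq Y.1 W.1) => hyw; first exact: distE_fiber.
rewrite distE_eq //; apply: dist_min; apply/walkP; exists [:: W.1]; split => //=.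
rewrite andbT; move: h hyw; rewrite h1 => /orP[/eqP ->|->] //; by rewrite eqxx.
Qed.

Lemma mdE (X Y : P) : X.1 != Y.1 -> max_distant E X Y = max_distant e X.1 Y.1.
Proof.
move=> hXY; rewrite /max_distant (distE_eq hXY); apply/idP/idP.
  move/forallP=> H; apply/forallP => w; apply/implyP => exw.
  have nxw : X != (w, X.2).
    apply/eqP => h; move: exw; by rewrite {1}h irr.
  have := H (w, X.2); rewrite EE /= exw orbT nxw /=.
  case: (eqVneq Y.1 w) => [<-|hyw]; first by rewrite dist_self.
  by rewrite distE_eq.
move/forallP=> H; apply/forallP => W; apply/implyP; rewrite EE => /andP[_ h].
case: (eqVneq Y.1 W.1) => hyw.
  apply: leq_trans (distE_fiber hyw) _; rewrite lt0n; apply/eqP => /(dist0 conn) h'.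
  by rewrite h' eqxx in hXY.
rewrite distE_eq //; case/orP: h => [/eqP <-|h]; first by rewrite dist_sym.
by have := H W.1; rewrite h.
Qed.

Lemma cl_lift (K : {set T}) : clique (strong_resolving e) K ->
  clique (strong_resolving E) (setX K [set: 'I_n]).
Proof.
move=> hK; apply/forallP => U; apply/implyP => hU; apply/forallP => V; apply/implyP => hV.
apply/implyP => nUV; rewrite /strong_resolving nUV /MMD /=.
case: (eqVneq U.1 V.1) => h.
  by rewrite !mdE_fiber // eq_sym.
rewrite !mdE // 1?eq_sym //.
have mX : forall A : P, A \in setX K [set: 'I_n] -> A.1 \in K.
  by move=> [a k]; rewrite in_setX => /andP[].
have := hK; move/forallP/(_ U.1)/implyP/(_ (mX _ hU))/forallP/(_ V.1)/implyP/(_ (mX _ hV)).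
by rewrite h /strong_resolving h /= => hm; exact: hm.
Qed.

Lemma cl_proj (C : {set P}) : clique (strong_resolving E) C ->
  clique (strong_resolving e) (fst @: C).
Proof.
move=> hC; apply/forallP => u; apply/implyP => /imsetP [U hU ->].
apply/forallP => v; apply/implyP => /imsetP [V hV ->].
apply/implyP => h; rewrite /strong_resolving h /MMD /=.
have nUV : U != V by apply: contraNneq h => ->.
have := hC; move/forallP/(_ U)/implyP/(_ hU)/forallP/(_ V)/implyP/(_ hV).
rewrite nUV /strong_resolving nUV /MMD /=.
by rewrite !mdE // eq_sym.
Qed.

Lemma max_prod (Pg : pred {set T}) (Pe : pred {set P}) :
  Pg set0 -> (forall S, Pg S -> Pe (setX S [set: 'I_n])) ->
  (forall S, Pe S -> Pg (fst @: S)) ->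
  \max_(S | Pe S) #|S| = n * \max_(S | Pg S) #|S|.
Proof.
move=> h0 hl hp; apply/eqP; rewrite eqn_leq; apply/andP; split.
  apply/bigmax_leqP => S hS.
  have hsub : S \subset setX (fst @: S) [set: 'I_n].
    apply/subsetP => -[a k] hA; rewrite in_setX in_setT andbT.
    by apply/imsetP; exists (a, k).
  apply: leq_trans (subset_leq_card hsub) _.
  rewrite cardsX cardsT card_ord mulnC leq_mul2l.
  by rewrite (leq_bigmax_cond _ (hp _ hS)) orbT.
elim/big_ind: _ => [|a b ha hb|S hS]; first by rewrite muln0.
  by rewrite /maxn; case: ifP.
apply: leq_trans (leq_bigmax_cond _ (hl _ hS)).
by rewrite cardsX cardsT card_ord mulnC.
Qed.

End Prod.

Theorem proposition4p3 (T : finType) (e : rel T) (n : nat) :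
  symmetric e -> irreflexive e -> connected_graph e -> 0 < n ->
  gp (strong_prod e (complete_graph n)) = n * gp e /\
  (gp e = omega (strong_resolving e) ->
   gp (strong_prod e (complete_graph n))
   = omega (strong_resolving (strong_prod e (complete_graph n)))).
Proof.
move=> hs hi hc _.
have h1 : gp (strong_prod e (complete_graph n)) = n * gp e.
  apply: max_prod => //.
  - by apply/forallP => u; rewrite in_set0.
  - exact: gp_lift.
  - exact: gp_proj.
split => // h; rewrite h1 h; symmetry.
apply: max_prod => //.
- by apply/forallP => u; rewrite in_set0.
- exact: cl_lift.
- exact: cl_proj.
Qed.
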